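(* Let $r \in \mathbb{Q}_{>1} \setminus \mathbb{N}$ (so $S_r$ is atomic). Let $x \in S_r \setminus \{0\}$ and let $z = \sum_{i=0}^N \alpha_i r^i \in \mathsf{Z}(x)$, where $N \in \mathbb{N}$ and $\alpha_0, \dots, \alpha_N \in \mathbb{N}_0$. Then: (1) $|z| = \min \mathsf{L}(x)$ if and only if $\alpha_i < \mathsf{n}(r)$ for all $i \in \{0, \dots, N\}$; (2) there is exactly one factorization in $\mathsf{Z}(x)$ of minimum length; (3) $|z| = \max \mathsf{L}(x)$ if and only if $\alpha_i < \mathsf{d}(r)$ for all $i \in \{1, \dots, N\}$; (4) there is exactly one factorization in $\mathsf{Z}(x)$ of maximum length; (5) $|\mathsf{Z}(x)| = 1$ if and only if $|\mathsf{L}(x)| = 1$, and in this case $\alpha_0 < \mathsf{n}(r)$ and $\alpha_i < \mathsf{d}(r)$ for all $i \in \{1, \dots, N\}$.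
   Context: For $q \in \mathbb{Q}_{>0}$, $\mathsf{n}(q)$ and $\mathsf{d}(q)$ denote the unique positive integers with $\gcd(\mathsf{n}(q),\mathsf{d}(q))=1$ and $q = \mathsf{n}(q)/\mathsf{d}(q)$. For $r \in \mathbb{Q}_{>0}$, $S_r$ denotes the additive submonoid of $(\mathbb{Q}_{\ge 0},+)$ generated by $\{r^n : n \in \mathbb{N}_0\}$. $S_r$ is atomic exactly when $r=1$ or $\mathsf{n}(r)>1$; if moreover $r \notin \mathbb{N}$, its atoms are exactly the pairwise distinct elements $r^n$, $n \in \mathbb{N}_0$. A factorization of $x \in S_r$ is a formal finite sum $\sum_i \alpha_i r^i$ with $\alpha_i \in \mathbb{N}_0$ whose value in $\mathbb{Q}$ is $x$; $\mathsf{Z}(x)$ is the set of factorizations of $x$, the length of $z=\sum_i \alpha_i r^i$ is $|z| = \sum_i \alpha_i$, and $\mathsf{L}(x) = \{|z| : z \in \mathsf{Z}(x)\}$. Two formal sums differing only by zero coefficients are identified. (For $r>1$, every $\mathsf{L}(x)$ is finite.) *)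

(* Defs.v *)
From HB Require Import structures.
From mathcomp Require Import all_boot all_order all_algebra.
Set Implicit Arguments. Unset Strict Implicit. Unset Printing Implicit Defensive.
Import Order.TTheory GRing.Theory Num.Theory.
Local Open Scope ring_scope.

Definition nq (q : rat) : nat := `|numq q|%N.
Definition dq (q : rat) : nat := `|denq q|%N.

(* A formal sum  sum_i a_i r^i  is represented by its coefficient sequence
   a = [:: a_0; ...; a_N]; coefficients beyond size a are 0. *)
Definition fval (r : rat) (a : seq nat) : rat :=
  \sum_(i < size a) (nth 0%N a i)%:R * r ^+ i.

Definition flen (a : seq nat) : nat := \sum_(i < size a) nth 0%N a i.

(* identification of formal sums differing only by zero coefficients *)
Definition fsame (a b : seq nat) : Prop := forall i, nth 0%N a i = nth 0%N b i.

Definition isFact (r x : rat) (a : seq nat) : Prop := fval r a = x.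

Definition isMinL (r x : rat) (n : nat) : Prop :=
  (exists a, isFact r x a /\ flen a = n) /\
  (forall a, isFact r x a -> (n <= flen a)%N).

Definition isMaxL (r x : rat) (n : nat) : Prop :=
  (exists a, isFact r x a /\ flen a = n) /\
  (forall a, isFact r x a -> (flen a <= n)%N).

(* |Z(x)| = 1 (given Z(x) nonempty): all factorizations are identified *)
Definition uniqZ (r x : rat) : Prop :=
  forall a b, isFact r x a -> isFact r x b -> fsame a b.

(* |L(x)| = 1 (given Z(x) nonempty) *)
Definition uniqL (r x : rat) : Prop :=
  forall a b, isFact r x a -> isFact r x b -> flen a = flen b.

(* Main.v *)
Require Import Defs.
From HB Require Import structures.
From mathcomp Require Import all_boot all_order all_algebra.
From mathcomp Require Import zify ring lra.
Import Order.TTheory GRing.Theory Num.Theory.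
Local Open Scope ring_scope.

Lemma rfacts (r : rat) : 1 < r -> denq r != 1 ->
  [/\ r * (dq r)%:R = (nq r)%:R, coprime (nq r) (dq r),
      (1 < dq r)%N & (dq r < nq r)%N].
Proof.
move=> hr1 hrN.
have r0 : 0 < r by apply: lt_trans hr1.
have hn : (nq r)%:R = (numq r)%:~R :> rat.
  rewrite /nq -[RHS]/((numq r)%:~R) -[(`|numq r|%N)%:R]/((`|numq r|%N : int)%:~R).
  by rewrite abszE ger0_norm // ltW // numq_gt0.
have hd : (dq r)%:R = (denq r)%:~R :> rat.
  rewrite /dq -[(`|denq r|%N)%:R]/((`|denq r|%N : int)%:~R).
  by rewrite abszE ger0_norm // ltW // denq_gt0.
have e : r * (dq r)%:R = (nq r)%:R.
  rewrite hn hd -{1}(divq_num_den r) mulrVK //.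
  by rewrite unitfE intr_eq0 denq_neq0.
have dpos : (0 < dq r)%N by rewrite /dq absz_gt0 denq_neq0.
split => //.
- exact: coprime_num_den.
- rewrite ltn_neqAle dpos andbT eq_sym; apply/negP => /eqP h1.
  have hz : denq r = (dq r)%:Z by rewrite /dq abszE ger0_norm // ltW // denq_gt0.
  by move: hrN; rewrite hz h1.
- rewrite -(ltr_nat rat) -e -[X in X < _]mul1r ltr_pM2r //.
  by rewrite ltr0n.
Qed.

Definition wsum (w : nat -> rat) (a : seq nat) (M : nat) :=
  \sum_(j < M) (nth 0%N a j)%:R * w j.

Lemma wsum_pad w a M : (size a <= M)%N -> wsum w a M = wsum w a (size a).
Proof.
move=> h; rewrite /wsum [RHS](big_ord_widen M (fun j => (nth 0%N a j)%:R * w j) h).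
rewrite [RHS]big_mkcond /=; apply: eq_bigr => i _; case: ifP => // /negbT.
by rewrite -leqNgt => hi; rewrite nth_default // mul0r.
Qed.

Lemma flenW a : (flen a)%:R = wsum (fun _ => 1) a (size a).
Proof. by rewrite /flen /wsum natr_sum; apply: eq_bigr => i _; rewrite mulr1. Qed.

Definition phi (n : nat) (a : seq nat) := (\sum_(i < size a) nth 0 a i * n ^ i)%N.

Lemma phiW n a : (phi n a)%:R = wsum (fun j => (n%:R)^+j) a (size a).
Proof. by rewrite /phi /wsum natr_sum; apply: eq_bigr => i _; rewrite natrM natrX. Qed.

Lemma sum_ind M k (v : rat) : (k < M)%N -> \sum_(j < M) ((j:nat) == k)%:R * v = v.
Proof.
move=> hk; rewrite (bigD1 (Ordinal hk)) //= eqxx mul1r big1 ?addr0 // => j hj.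
have : (j:nat) != k by apply: contra hj => /eqP e; apply/eqP/val_inj.
by move/negbTE => ->; rewrite mul0r.
Qed.

Definition trade (a : seq nat) i c t e M :=
  mkseq (fun j => if j == i then (nth 0 a j - c)%N
                  else if j == t then (nth 0 a j + e)%N else nth 0 a j) M.

Lemma wsum_trade w a i c t e M : (c <= nth 0 a i)%N -> i != t ->
  (size a <= M)%N -> (i < M)%N -> (t < M)%N ->
  wsum w (trade a i c t e M) (size (trade a i c t e M)) =
  wsum w a (size a) - c%:R * w i + e%:R * w t.
Proof.
move=> hc hit hM hiM htM; rewrite size_mkseq -(@wsum_pad w a M hM) /wsum.
have E : forall j : 'I_M, (nth 0 (trade a i c t e M) j)%:R * w j =
   (nth 0 a j)%:R * w j - ((j:nat) == i)%:R * (c%:R * w i)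
   + ((j:nat) == t)%:R * (e%:R * w t).
  move=> j; rewrite nth_mkseq //.
  case: eqP => [->|hji].
    by rewrite (negbTE hit) natrB //= mul1r mul0r addr0 mulrBl.
  case: eqP => [->|_] /=; first by rewrite natrD mul0r mul1r subr0 mulrDl.
  by rewrite !mul0r subr0 addr0.
by rewrite (eq_bigr _ (fun j _ => E j)) big_split sumrB /= !sum_ind.
Qed.
Arguments wsum_trade w {a i c t e M}.

Lemma fvalW r a : fval r a = wsum (fun j => r ^+ j) a (size a).
Proof. by []. Qed.

Lemma trade_down r a i : 1 < r -> denq r != 1 -> (nq r <= nth 0 a i)%N ->
  exists b, fval r b = fval r a /\ (flen b < flen a)%N.
Proof.
move=> hr1 hrN hn; have [e cop d1 dn] := rfacts r hr1 hrN.
have hi : (i < size a)%N.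
  rewrite ltnNge; apply/negP => h; move: hn; rewrite nth_default //; lia.
have hit : i != i.+1 by rewrite neq_ltn ltnSn.
have h1 : (size a <= (size a).+1)%N by lia.
have h2 : (i < (size a).+1)%N by lia.
have h3 : (i.+1 < (size a).+1)%N by lia.
exists (trade a i (nq r) i.+1 (dq r) (size a).+1); split.
  rewrite !fvalW (wsum_trade _ hn hit h1 h2 h3).
  by rewrite exprS mulrA -[_%:R * r]mulrC e addrNK.
have := wsum_trade (fun _ => 1) hn hit h1 h2 h3.
rewrite !mulr1; set b := trade _ _ _ _ _ _ => h.
have : (flen b + nq r)%N = (flen a + dq r)%N.
  by apply/eqP; rewrite -(eqr_nat rat) !natrD !flenW h; apply/eqP; ring.
lia.
Qed.

Lemma trade_up r a t : 1 < r -> denq r != 1 -> (dq r <= nth 0 a t.+1)%N ->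
  exists b, fval r b = fval r a /\ (flen a < flen b)%N /\
            (phi (nq r) b < phi (nq r) a)%N.
Proof.
move=> hr1 hrN hn; have [e cop d1 dn] := rfacts r hr1 hrN.
have hi : (t.+1 < size a)%N.
  rewrite ltnNge; apply/negP => h; move: hn; rewrite nth_default //; lia.
have hit : t.+1 != t by rewrite neq_ltn ltnSn orbT.
have h1 : (size a <= (size a).+1)%N by lia.
have h2 : (t.+1 < (size a).+1)%N by lia.
have h3 : (t < (size a).+1)%N by lia.
exists (trade a t.+1 (dq r) t (nq r) (size a).+1); split; [|split].
- rewrite !fvalW (wsum_trade _ hn hit h1 h2 h3).
  by rewrite exprS mulrA -[_%:R * r]mulrC e subrK.
- have := wsum_trade (fun _ => 1) hn hit h1 h2 h3.
  rewrite !mulr1; set b := trade _ _ _ _ _ _ => h.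
  have : (flen b + dq r)%N = (flen a + nq r)%N.
    by apply/eqP; rewrite -(eqr_nat rat) !natrD !flenW h; apply/eqP; ring.
  lia.
- have := wsum_trade (fun j => (nq r)%:R ^+ j) hn hit h1 h2 h3.
  set b := trade _ _ _ _ _ _ => h.
  have : (phi (nq r) b + dq r * nq r ^ t.+1)%N = (phi (nq r) a + nq r * nq r ^ t)%N.
    by apply/eqP; rewrite -(eqr_nat rat) !natrD !natrM !natrX !phiW h; apply/eqP; ring.
  rewrite expnS.
  have : (0 < nq r ^ t)%N by rewrite expn_gt0; apply/orP; left; lia.
  nia.
Qed.

Definition lowN r a := forall i, (nth 0 a i < nq r)%N.
Definition lowD r a := forall i, (1 <= i)%N -> (nth 0 a i < dq r)%N.

Lemma norm_down r a : 1 < r -> denq r != 1 ->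
  exists c, fval r c = fval r a /\ (flen c <= flen a)%N /\ lowN r c.
Proof.
move=> hr1 hrN; have [_ _ d1 dn] := rfacts r hr1 hrN.
suff H : forall L a, (flen a < L)%N ->
  exists c, fval r c = fval r a /\ (flen c <= flen a)%N /\ lowN r c.
  exact: (H (flen a).+1).
elim=> [|L IH] {}a hL; first by [].
case hall: (all (fun k => (k < nq r)%N) a).
- exists a; split; [done|split; [done|]].
  move=> i; case: (ltnP i (size a)) => hi.
    by move/(all_nthP 0%N): hall => /(_ i hi).
  rewrite nth_default //; lia.
- move/negbT: hall; rewrite -has_predC => /(has_nthP 0%N) [i hi /=].
  rewrite -leqNgt => hn.
  have [b [hb hlen]] := trade_down r a i hr1 hrN hn.
  have [c [hc [hcl hlow]]] := IH b ltac:(lia).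
  exists c; split; [by rewrite hc hb| split; [lia|done]].
Qed.

Lemma norm_up r a : 1 < r -> denq r != 1 ->
  exists c, fval r c = fval r a /\ (flen a <= flen c)%N /\ lowD r c.
Proof.
move=> hr1 hrN; have [_ _ d1 dn] := rfacts r hr1 hrN.
suff H : forall L a, (phi (nq r) a < L)%N ->
  exists c, fval r c = fval r a /\ (flen a <= flen c)%N /\ lowD r c.
  exact: (H (phi (nq r) a).+1).
elim=> [|L IH] {}a hL; first by [].
case hall: (all (fun k => (k < dq r)%N) (behead a)).
- exists a; split; [done|split; [done|]].
  case=> [|j] // _; rewrite -nth_behead.
  case: (ltnP j (size (behead a))) => hj.
    by move/(all_nthP 0%N): hall => /(_ j hj).
  rewrite nth_default //; lia.
- move/negbT: hall; rewrite -has_predC => /(has_nthP 0%N) [j hj /=].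
  rewrite -leqNgt nth_behead => hn.
  have [b [hb [hlen hphi]]] := trade_up r a j hr1 hrN hn.
  have [c [hc [hcl hlow]]] := IH b ltac:(lia).
  exists c; split; [by rewrite hc hb| split; [lia|done]].
Qed.

Lemma fval_nil r : fval r [::] = 0.
Proof. by rewrite /fval big_ord0. Qed.

Lemma fval_cons r a : fval r a = (nth 0 a 0)%:R + r * fval r (behead a).
Proof.
case: a => [|a0 a]; first by rewrite fval_nil mulr0 addr0.
rewrite /fval /= big_ord_recl /= expr0 mulr1 mulr_sumr; congr (_ + _).
by apply: eq_bigr => i _; rewrite exprS /=; ring.
Qed.

Lemma rep r (hr1 : 1 < r) (hrN : denq r != 1) k a : (size a <= k.+1)%N ->
  exists p : nat, fval r a * (dq r)%:R ^+ k = p%:R.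
Proof.
have [e _ _ _] := rfacts r hr1 hrN.
elim: a k => [|a0 a IH] k hs; first by exists 0%N; rewrite fval_nil mul0r.
rewrite fval_cons /=; case: k hs => [|k] hs.
  have -> : a = [::] by case: a {IH} hs.
  by exists a0; rewrite fval_nil mulr0 addr0 expr0 mulr1.
have [p hp] := IH k hs.
exists (a0 * dq r ^ k.+1 + nq r * p)%N.
rewrite natrD !natrM natrX -hp -e exprS; ring.
Qed.

Lemma cancel_coprime m D u v P Q : coprime m D -> (u < m)%N -> (v < m)%N ->
  (u * D + m * P = v * D + m * Q)%N -> u = v.
Proof.
move=> cop.
wlog huv : u v P Q / (u <= v)%N.
  move=> H hu hv E; case: (leqP u v) => h.
    exact: (H u v P Q h hu hv E).
  by symmetry; apply: (H v u Q P) => //; lia.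
move=> hu hv E.
have hd : (m %| (v - u) * D)%N.
  apply/dvdnP; exists (P - Q)%N.
  rewrite mulnBl mulnBl [(P * m)%N]mulnC [(Q * m)%N]mulnC; lia.
rewrite Gauss_dvdl // in hd.
case: (posnP (v - u)) => h0; first lia.
have := dvdn_leq h0 hd; lia.
Qed.

Lemma head_eq r (hr1 : 1 < r) (hrN : denq r != 1) a b :
  lowN r a -> lowN r b -> fval r a = fval r b -> nth 0 a 0 = nth 0 b 0.
Proof.
have [e cop _ _] := rfacts r hr1 hrN.
move=> ha hb E.
set k := (size a + size b)%N.
have [pA hA] := rep r hr1 hrN k (behead a) ltac:(rewrite size_behead; lia).
have [pB hB] := rep r hr1 hrN k (behead b) ltac:(rewrite size_behead; lia).
have Ea : fval r a * (dq r)%:R ^+ k.+1 =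
   (nth 0 a 0 * dq r ^ k.+1 + nq r * pA)%N%:R.
  by rewrite natrD !natrM natrX -hA -e fval_cons exprS; ring.
have Eb : fval r b * (dq r)%:R ^+ k.+1 =
   (nth 0 b 0 * dq r ^ k.+1 + nq r * pB)%N%:R.
  by rewrite natrD !natrM natrX -hB -e fval_cons exprS; ring.
apply: (@cancel_coprime (nq r) (dq r ^ k.+1) _ _ pA pB (coprimeXr _ cop) (ha 0%N) (hb 0%N)).
by apply/eqP; rewrite -(eqr_nat rat) -Ea -Eb E.
Qed.

Lemma uniqN r (hr1 : 1 < r) (hrN : denq r != 1) a b :
  lowN r a -> lowN r b -> fval r a = fval r b -> fsame a b.
Proof.
move=> ha hb E i; elim: i a b ha hb E => [|i IH] a b ha hb E.
  exact: head_eq r hr1 hrN a b ha hb E.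
rewrite -!nth_behead; apply: IH.
- by move=> j; rewrite nth_behead.
- by move=> j; rewrite nth_behead.
have r0 : r != 0 by apply: lt0r_neq0; apply: lt_trans hr1.
have h0 := head_eq r hr1 hrN a b ha hb E.
move: E; rewrite (fval_cons r a) (fval_cons r b) h0.
by move/addrI/(mulfI r0).
Qed.

Lemma nth_takeE (s : seq nat) n i :
  nth 0 (take n s) i = if (i < n)%N then nth 0 s i else 0%N.
Proof.
case: ltnP => h; first by rewrite nth_take.
rewrite nth_default // size_take; case: ltnP => //; lia.
Qed.

Lemma size_take_le (s : seq nat) n : (size (take n s) <= n)%N.
Proof. by rewrite size_take; case: ltnP => //; lia. Qed.

Lemma fval_take r a N : (size a <= N.+1)%N ->
  fval r a = fval r (take N a) + (nth 0 a N)%:R * r ^+ N.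
Proof.
move=> hs.
rewrite !fvalW -(@wsum_pad _ a N.+1 hs) -(@wsum_pad _ (take N a) N (size_take_le a N)).
rewrite /wsum big_ord_recr /=; congr (_ + _).
by apply: eq_bigr => i _; rewrite nth_take.
Qed.

Lemma uniqD_aux r (hr1 : 1 < r) (hrN : denq r != 1) N a b :
  (size a <= N.+1)%N -> (size b <= N.+1)%N ->
  lowD r a -> lowD r b -> fval r a = fval r b -> fsame a b.
Proof.
have [e cop d1 dn] := rfacts r hr1 hrN.
elim: N a b => [|N IH] a b ha hb la lb E.
  move: E; rewrite (fval_take r a _ ha) (fval_take r b _ hb) !take0 !fval_nil !add0r !expr0 !mulr1.
  move/eqP; rewrite eqr_nat => /eqP h0.
  by case=> [|i] //; rewrite !nth_default //; lia.
have [pA hA] := rep r hr1 hrN N (take N.+1 a) (size_take_le a N.+1).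
have [pB hB] := rep r hr1 hrN N (take N.+1 b) (size_take_le b N.+1).
have Ea : fval r a * (dq r)%:R ^+ N.+1 =
   (nth 0 a N.+1 * nq r ^ N.+1 + dq r * pA)%N%:R.
  rewrite natrD !natrM !natrX -hA -e (fval_take r a _ ha) exprMn !exprS.
  set x := (nth 0%N a N.+1)%:R; ring.
have Eb : fval r b * (dq r)%:R ^+ N.+1 =
   (nth 0 b N.+1 * nq r ^ N.+1 + dq r * pB)%N%:R.
  rewrite natrD !natrM !natrX -hB -e (fval_take r b _ hb) exprMn !exprS.
  set x := (nth 0%N b N.+1)%:R; ring.
have hN : nth 0 a N.+1 = nth 0 b N.+1.
  apply: (@cancel_coprime (dq r) (nq r ^ N.+1) _ _ pA pB).
  - by apply: coprimeXr; rewrite coprime_sym.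
  - exact: la.
  - exact: lb.
  by apply/eqP; rewrite -(eqr_nat rat) -Ea -Eb E.
have Et : fval r (take N.+1 a) = fval r (take N.+1 b).
  by move: E; rewrite (fval_take r a _ ha) (fval_take r b _ hb) hN => /addIr.
have := IH _ _ (size_take_le a N.+1) (size_take_le b N.+1) _ _ Et.
have lt : forall s, lowD r s -> lowD r (take N.+1 s).
  by move=> s ls i hi; rewrite nth_takeE; case: ifP => _; [exact: ls|lia].
move=> /(_ (lt _ la) (lt _ lb)) H i.
have := H i; rewrite !nth_takeE.
case: (ltnP i N.+1) => // hi _.
case: (ltnP N.+1 i) => hi2; last by have -> : i = N.+1 by lia.
by rewrite !nth_default //; lia.
Qed.

Lemma uniqD r (hr1 : 1 < r) (hrN : denq r != 1) a b :
  lowD r a -> lowD r b -> fval r a = fval r b -> fsame a b.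
Proof.
by apply: (uniqD_aux r hr1 hrN (size a + size b)); lia.
Qed.

Lemma flen_same a b : fsame a b -> flen a = flen b.
Proof.
move=> h; apply/eqP; rewrite -(eqr_nat rat) !flenW.
rewrite -(@wsum_pad _ a (size a + size b)) ?leq_addr //.
rewrite -(@wsum_pad _ b (size a + size b)) ?leq_addl //.
by apply/eqP; apply: eq_bigr => i _; rewrite h.
Qed.

Theorem lemma3p2 (r : rat) (hr1 : 1 < r) (hrN : denq r != 1)
    (x : rat) (hx0 : x != 0) (alpha : seq nat) (hz : isFact r x alpha) :
  [/\ (isMinL r x (flen alpha) <->
         (forall i, (i < size alpha)%N -> (nth 0%N alpha i < nq r)%N)),
      (exists a, isFact r x a /\ isMinL r x (flen a) /\
         forall b, isFact r x b -> isMinL r x (flen b) -> fsame b a),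
      (isMaxL r x (flen alpha) <->
         (forall i, (1 <= i < size alpha)%N -> (nth 0%N alpha i < dq r)%N)),
      (exists a, isFact r x a /\ isMaxL r x (flen a) /\
         forall b, isFact r x b -> isMaxL r x (flen b) -> fsame b a) &
      ((uniqZ r x <-> uniqL r x) /\
       (uniqL r x ->
          (nth 0%N alpha 0 < nq r)%N /\
          (forall i, (1 <= i < size alpha)%N -> (nth 0%N alpha i < dq r)%N)))].
Proof.
have [e cop d1 dn] := rfacts r hr1 hrN.
have minL : forall b, isFact r x b -> isMinL r x (flen b) -> lowN r b.
  move=> b hb [_ hmin] i; rewrite ltnNge; apply/negP => hn.
  have [b' [hb' hl]] := trade_down r b i hr1 hrN hn.
  have := hmin b' (etrans hb' hb); lia.
have maxL : forall b, isFact r x b -> isMaxL r x (flen b) -> lowD r b.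
  move=> b hb [_ hmax] [|i] // _; rewrite ltnNge; apply/negP => hn.
  have [b' [hb' [hl _]]] := trade_up r b i hr1 hrN hn.
  have := hmax b' (etrans hb' hb); lia.
have lowN_min : forall b, isFact r x b -> lowN r b -> isMinL r x (flen b).
  move=> b hb lb; split; first by exists b.
  move=> c hc; have [c' [hc' [hl hlow]]] := norm_down r c hr1 hrN.
  have hs := uniqN r hr1 hrN c' b hlow lb (etrans hc' (etrans hc (esym hb))).
  by rewrite -(flen_same _ _ hs).
have lowD_max : forall b, isFact r x b -> lowD r b -> isMaxL r x (flen b).
  move=> b hb lb; split; first by exists b.
  move=> c hc; have [c' [hc' [hl hlow]]] := norm_up r c hr1 hrN.
  have hs := uniqD r hr1 hrN c' b hlow lb (etrans hc' (etrans hc (esym hb))).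
  by rewrite -(flen_same _ _ hs).
have [m [hm [_ hml]]] := norm_down r alpha hr1 hrN.
have hmf : isFact r x m by rewrite /isFact hm.
have [M [hM [_ hMl]]] := norm_up r alpha hr1 hrN.
have hMf : isFact r x M by rewrite /isFact hM.
split.
- split; first by move/(minL _ hz) => h i _; exact: h.
  move=> h; apply: lowN_min hz _ => i.
  case: (ltnP i (size alpha)) => hi; first exact: h.
  rewrite nth_default //; lia.
- exists m; split; [done|split; [exact: lowN_min|]].
  move=> b hb hbm; apply: (uniqN r hr1 hrN b m (minL b hb hbm) hml).
  by rewrite hb hmf.
- split; first by move/(maxL _ hz) => h i /andP [hi _]; exact: h.
  move=> h; apply: lowD_max hz _ => i hi.
  case: (ltnP i (size alpha)) => hi2; first by apply: h; rewrite hi hi2.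
  rewrite nth_default //; lia.
- exists M; split; [done|split; [exact: lowD_max|]].
  move=> b hb hbm; apply: (uniqD r hr1 hrN b M (maxL b hb hbm) hMl).
  by rewrite hb hMf.
- split.
    split => H a b ha hb; first exact: flen_same _ _ (H a b ha hb).
    have la : lowN r a by apply: (minL a ha); rewrite (H a m ha hmf); exact: lowN_min.
    have lb : lowN r b by apply: (minL b hb); rewrite (H b m hb hmf); exact: lowN_min.
    by apply: (uniqN r hr1 hrN a b la lb); rewrite ha hb.
  move=> H.
  have la : lowN r alpha
    by apply: (minL alpha hz); rewrite (H alpha m hz hmf); exact: lowN_min.
  have lb : lowD r alpha
    by apply: (maxL alpha hz); rewrite (H alpha M hz hMf); exact: lowD_max.
  split; first exact: la.
  by move=> i /andP [hi _]; exact: lb.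
Qed.
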